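(* Let $k\ge1$, $m\ge1$, $h\ge0$ be fixed integers. For the random key graph $G(n,X_n,Y_n)$ with $X_n\ge2$ for all large $n$ and edge probability $q_n=\frac{\ln n+(k-1)\ln\ln n+\alpha_n}{n}$ with $\alpha_n=o(\ln n)$, let $N_i$ ($1\le i\le m$) be the set of nodes in $\{v_{m+1},\dots,v_n\}$ adjacent to $v_i$. Let $P_a$ be the probability of the event that (a) $S_i\cap S_j=\emptyset$ for all $1\le i<j\le m$, (b) $N_i\cap N_j=\emptyset$ for all $1\le i<j\le m$, and (c) $|N_i|=h$ for all $1\le i\le m$. Then $$P_a\sim (h!)^{-m}(nq_n)^{hm}e^{-mnq_n}\quad(n\to\infty).$$
   Context: The random key graph $G(n,X_n,Y_n)$ (with $1\le X_n\le Y_n$ integers depending on $n$) has node set $\{v_1,\dots,v_n\}$; each node $v_i$ is independently assigned a set $S_i$ of $X_n$ distinct objects chosen uniformly at random among all $X_n$-element subsets of a pool of $Y_n$ objects; an undirected edge joins $v_i$ and $v_j$ ($i\ne j$) iff $S_i\cap S_j\neq\emptyset$. The edge probability is $q_n=1-\binom{Y_n-X_n}{X_n}/\binom{Y_n}{X_n}$. $x_n\sim y_n$ means $x_n/y_n\to1$. *)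

(* Defs.v *)
From HB Require Import structures.
From mathcomp Require Import all_boot.
From Stdlib Require Import Reals.

Set Implicit Arguments.
Unset Strict Implicit.
Unset Printing Implicit Defensive.

(* Nodes v_1..v_n are indexed by 'I_n (v_{i+1} <-> i); the key pool is 'I_Y.
   A key assignment is S : {ffun 'I_n -> {set 'I_Y}}; it is admissible when
   every S_i has exactly X elements. The sample space of G(n,X,Y) is the
   (uniformly distributed) set of admissible assignments. *)
Definition keyring_ok (n X Y : nat) (S : {ffun 'I_n -> {set 'I_Y}}) : bool :=
  [forall i, #|S i| == X].

Definition adj (n Y : nat) (S : {ffun 'I_n -> {set 'I_Y}}) (i j : 'I_n) : bool :=
  (i != j) && (S i :&: S j != set0).

Definition nbhd (n Y m : nat) (S : {ffun 'I_n -> {set 'I_Y}}) (i : 'I_n) : {set 'I_n} :=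
  [set j : 'I_n | (m <= j) && adj S i j].

Definition event_a (n Y m h : nat) (S : {ffun 'I_n -> {set 'I_Y}}) : bool :=
  [forall i : 'I_n, forall j : 'I_n, ((i < j) && (j < m)) ==>
      ((S i :&: S j == set0) && (nbhd m S i :&: nbhd m S j == set0))]
  && [forall i : 'I_n, (i < m) ==> (#|nbhd m S i| == h)].

Definition count_a (n X Y m h : nat) : nat :=
  #|[set S : {ffun 'I_n -> {set 'I_Y}} | keyring_ok X S && event_a m h S]|.

Definition count_total (n X Y : nat) : nat :=
  #|[set S : {ffun 'I_n -> {set 'I_Y}} | keyring_ok X S]|.

Local Open Scope R_scope.

Definition prob_a (n X Y m h : nat) : R :=
  INR (count_a n X Y m h) / INR (count_total n X Y).

Definition q_edge (X Y : nat) : R :=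
  1 - INR (binomial.binomial (subn Y X) X) / INR (binomial.binomial Y X).

(* Main.v *)
Require Import Defs.
From Stdlib Require Import Reals Factorial Lra Lia Psatz.

Module Comb.
From Stdlib Require Import Reals Factorial.
From HB Require Import structures.
From mathcomp Require Import all_boot zify.
From Stdlib Require Import ArithRing.
Local Set Implicit Arguments.
Local Unset Strict Implicit.
Local Unset Printing Implicit Defensive.
Lemma card_fam (aT rT : finType) (F : aT -> pred rT) :
  #|[set f : {ffun aT -> rT} | [forall x, f x \in F x]]| = \prod_(x : aT) #|F x|.
Proof.
rewrite (_ : \prod_(x : aT) #|F x| = foldr muln 1 [seq #|F x| | x : aT]); last first.
  by rewrite /image_mem foldrE big_map big_enum.
rewrite -(card_family (fun x => F x)); apply: eq_card => f.
by rewrite inE; apply/forallP/familyP.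
Qed.
Lemma card_bigcup_ord (T : finType) m (g : 'I_m -> {set T}) x :
  (forall i, #|g i| = x) -> (forall i j, i != j -> [disjoint g i & g j]) ->
  #|\bigcup_(i < m) g i| = m * x.
Proof.
elim: m g => [|m IH] g gx gd; first by rewrite big_ord0 cards0.
rewrite big_ord_recr /= cardsU IH; last first.
- move=> i j ij; apply: gd; apply: contra ij => /eqP/(congr1 val) /= e.
  by apply/eqP/val_inj.
- by move=> i; apply: gx.
rewrite gx disjoint_setI0; last first.
  rewrite disjoint_sym; apply: bigcup_disjoint => i _; rewrite disjoint_sym.
  apply: gd; apply/eqP => /(congr1 val) /= e; have := ltn_ord i; rewrite e ltnn.
  by [].
by rewrite cards0 subn0 mulSn addnC.
Qed.

Definition dval (T : finType) (m x : nat) (U : {set T}) (f : {ffun 'I_m -> {set T}}) : bool :=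
  [forall i, (f i \subset U) && (#|f i| == x)] &&
  [forall i, forall j, (i != j) ==> [disjoint f i & f j]].

Lemma card_dval (T : finType) m x (U : {set T}) :
  #|[set f : {ffun 'I_m -> {set T}} | dval x U f]| = \prod_(i < m) 'C(#|U| - i * x, x).
Proof.
elim: m => [|m IH].
  rewrite big_ord0; apply: (@eq_card1 _ [ffun i => set0]) => f.
  rewrite !inE; apply/idP/eqP => [_|->]; first by apply/ffunP => -[].
  by apply/andP; split; apply/forallP => -[].
pose tl (f : {ffun 'I_m.+1 -> {set T}}) := [ffun i : 'I_m => f (lift ord0 i)].
have tlv f : dval x U f -> dval x U (tl f).
  case/andP => /forallP h1 /forallP h2; apply/andP; split; apply/forallP => i.
    by rewrite ffunE; apply: h1.
  apply/forallP => j; rewrite !ffunE; apply/implyP => ij.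
  by have /forallP/(_ (lift ord0 j))/implyP := h2 (lift ord0 i); apply; rewrite (inj_eq (@lift_inj _ _)).
rewrite -sum1_card (partition_big tl (fun g => dval x U g)); last by move=> f; rewrite inE; apply: tlv.
rewrite big_ord_recr /= -IH -sum1_card big_distrl /=.
rewrite [RHS](eq_bigl (fun g => dval x U g)); last by move=> g; rewrite inE.
apply: eq_bigr => g gv; rewrite mul1n.
pose K := [set A : {set T} | A \subset U :\: \bigcup_(i < m) g i & #|A| == x].
pose F (j : 'I_m.+1) : pred {set T} :=
  if unlift ord0 j is Some i then pred1 (g i) else mem K.
rewrite (eq_bigl (fun f => dval x U f && (tl f == g))); last by move=> f; rewrite inE.
rewrite sum1_card.
transitivity #|[set f : {ffun 'I_m.+1 -> {set T}} | [forall j, f j \in F j]]|.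
  have [gv1 gv3] := andP gv.
  apply: eq_card => f; rewrite !inE; apply/idP/idP.
    case/andP => /andP [/forallP f1 /forallP f2] /eqP tlf; apply/forallP => j.
    rewrite /F; case: (unliftP ord0 j) => [i ->|->].
      by rewrite -tlf ffunE inE.
    rewrite inE; have /andP[f1a f1b] := f1 ord0; rewrite f1b andbT.
    rewrite setDE subsetI f1a /= -disjoints_subset; apply: bigcup_disjoint => i _.
    rewrite -tlf ffunE; have /forallP/(_ (lift ord0 i))/implyP := f2 ord0; apply.
    by apply/eqP => /(congr1 val).
  move=> /forallP fF.
  have fv j : (f j \subset U) && (#|f j| == x).
    have := fF j; rewrite /F; case: (unliftP ord0 j) => [i _ /eqP ->|_].
      by have /forallP := gv1.
    rewrite inE => /andP [fs ->]; rewrite andbT; apply: subset_trans fs _.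
    by apply: subsetDl.
  have tlf : tl f = g.
    apply/ffunP => i; rewrite ffunE; have := fF (lift ord0 i).
    by rewrite /F liftK => /eqP.
  rewrite unfold_in /= tlf eqxx andbT; apply/andP; split; apply/forallP => // i.
  apply/forallP => j; apply/implyP => ij.
  have K0 i' : [disjoint f ord0 & g i'].
    have := fF ord0; rewrite /F unlift_none inE => /andP [fs _].
    move: fs; rewrite subsetD => /andP[_ d]; apply: disjointWr d.
    exact: (bigcup_sup i').
  have fl i' : f (lift ord0 i') = g i'.
    by rewrite -tlf ffunE.
  move: ij; case: (unliftP ord0 i) => [i' ->|->]; case: (unliftP ord0 j) => [j' ->|->].
  - rewrite (inj_eq (@lift_inj _ _)) !fl => ij.
    by have /forallP/(_ i')/forallP/(_ j')/implyP := gv3; apply.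
  - by rewrite fl disjoint_sym.
  - by rewrite fl.
  - by rewrite eqxx.
rewrite card_fam big_ord_recl /= big1; last first.
  by move=> i _; rewrite /F liftK card1.
rewrite muln1 /F unlift_none cards_draws cardsD.
have [gv1 gv3] := andP gv.
rewrite (setIidPr _); last by apply/bigcupsP => i _; have /forallP/(_ i)/andP[] := gv1.
rewrite (@card_bigcup_ord _ _ _ x) //.
  by move=> i; have /forallP/(_ i)/andP[_ /eqP] := gv1.
by move=> i j ij; have /forallP/(_ i)/forallP/(_ j)/implyP := gv3; apply.
Qed.


Section Count.
Variables (n X Y m h : nat) (le : m <= n).

Let w (i : 'I_m) : 'I_n := widen_ord le i.
Definition preS (S : {ffun 'I_n -> {set 'I_Y}}) := [ffun i : 'I_m => S (w i)].
Definition NbS (S : {ffun 'I_n -> {set 'I_Y}}) := [ffun i : 'I_m => nbhd m S (w i)].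
Definition Dset := [set j : 'I_n | m <= j].

Lemma w_lt (i : 'I_m) : w i < m. Proof. by rewrite /w /=. Qed.

Lemma to_m (j : 'I_n) : j < m -> {i : 'I_m | w i = j}.
Proof. move=> jm; exists (Ordinal jm); exact: val_inj. Qed.

Lemma valid_of S : keyring_ok X S && event_a m h S ->
  dval X [set: 'I_Y] (preS S) && dval h Dset (NbS S).
Proof.
case/andP => okS /andP [/forallP ea /forallP eb].
have ea' (i j : 'I_m) : i != j -> (S (w i) :&: S (w j) == set0) && (nbhd m S (w i) :&: nbhd m S (w j) == set0).
  move=> ij; case: (ltngtP i j) => c.
  - by have /forallP/(_ (w j))/implyP := ea (w i); apply; rewrite /= c ltn_ord.
  - have /forallP/(_ (w i))/implyP := ea (w j); rewrite /= c ltn_ord => /(_ isT).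
    by rewrite setIC [nbhd _ _ (w j) :&: _]setIC.
  - by move: ij; rewrite (_ : i = j) ?eqxx //; apply: val_inj.
apply/andP; split; apply/andP; split; apply/forallP => i.
- rewrite ffunE subsetT /=; exact: (forallP okS).
- apply/forallP => j; apply/implyP => ij; rewrite !ffunE -setI_eq0.
  by case/andP: (ea' i j ij).
- rewrite ffunE; apply/andP; split.
    by apply/subsetP => j; rewrite !inE => /andP[].
  by have /implyP := eb (w i); apply; rewrite w_lt.
- apply/forallP => j; apply/implyP => ij; rewrite !ffunE -setI_eq0.
  by case/andP: (ea' i j ij).
Qed.


Definition Fp (p : {ffun 'I_m -> {set 'I_Y}}) (B : {ffun 'I_m -> {set 'I_n}}) (j : 'I_n) :
  pred {set 'I_Y} :=
  [pred A | if j < m then [forall i : 'I_m, (val i == val j) ==> (A == p i)]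
            else (#|A| == X) && [forall i : 'I_m, (A :&: p i != set0) == (j \in B i)]].

Lemma fiber_eq p B : dval X [set: 'I_Y] p -> dval h Dset B -> forall S,
  (keyring_ok X S && event_a m h S && ((preS S, NbS S) == (p, B))) =
  [forall j, S j \in Fp p B j].
Proof.
move=> /andP[/forallP pv1 /forallP pv2] /andP[/forallP Bv1 /forallP Bv2] S.
apply/idP/idP.
  case/andP => /andP [/forallP okS _] /eqP [<- <-]; apply/forallP => j.
  rewrite inE /=; case: ifP => jm.
    apply/forallP => i; apply/implyP => /eqP ij.
    by rewrite ffunE (_ : w i = j) //; apply: val_inj.
  rewrite okS /=; apply/forallP => i; rewrite !ffunE inE /adj.
  rewrite leqNgt jm /= setIC.
  have -> : (w i != j) by apply/eqP => e; move: (w_lt i); rewrite e jm.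
  by [].
move/forallP => FS.
have Hpre i : S (w i) = p i.
  have := FS (w i); rewrite inE /= w_lt => /forallP/(_ i)/implyP/(_ (eqxx _)).
  by move/eqP.
have HN (j : 'I_n) : m <= j -> (#|S j| == X) && [forall i : 'I_m, (S j :&: p i != set0) == (j \in B i)].
  by move=> mj; have := FS j; rewrite inE /= ltnNge mj.
have preE : preS S = p by apply/ffunP => i; rewrite ffunE Hpre.
have NbE : NbS S = B.
  apply/ffunP => i; rewrite ffunE; apply/setP => j; rewrite inE /adj.
  case: (leqP m j) => mj /=.
    have /andP[_ /forallP/(_ i)/eqP <-] := HN j mj.
    have -> : (w i != j) by apply/eqP => e; move: (w_lt i); rewrite e ltnNge mj.
    by rewrite Hpre setIC.
  apply/esym/negP => jB; have /andP[/subsetP sB _] := Bv1 i.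
  by have := sB _ jB; rewrite inE leqNgt mj.
rewrite preE NbE eqxx andbT; apply/andP; split.
  apply/forallP => j; case: (ltnP j m) => jm.
    by have [i <-] := to_m jm; rewrite Hpre; have /andP[_ ->] := pv1 i.
  by have /andP[-> _] := HN j jm.
have Hnb i : nbhd m S (w i) = B i by rewrite -NbE ffunE.
apply/andP; split; apply/forallP => i.
  apply/forallP => j; apply/implyP => /andP [ij jm].
  have [j' ej] := to_m jm; have [i' ei] := to_m (ltn_trans ij jm).
  have ne : i' != j'.
    by apply/eqP => e; move: ij; rewrite -ei -ej e ltnn.
  rewrite -ei -ej Hpre Hpre !Hnb !setI_eq0.
  have /forallP/(_ j')/implyP/(_ ne) -> := pv2 i'.
  by have /forallP/(_ j')/implyP/(_ ne) -> := Bv2 i'.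
apply/implyP => im; have [i' <-] := to_m im.
by rewrite Hnb; have /andP[_ ->] := Bv1 i'.
Qed.


Lemma card_avoid (W : {set 'I_Y}) :
  #|[set A : {set 'I_Y} | [disjoint A & W] && (#|A| == X)]| = 'C(Y - #|W|, X).
Proof.
have -> : Y - #|W| = #|~: W| by rewrite -[Y in Y - _]card_ord -(cardsC W) addKn.
rewrite -cards_draws; apply: eq_card => A.
by rewrite !inE disjoints_subset.
Qed.

Definition c0 := 'C(Y - m * X, X).
Definition c1 := 'C(Y - m.-1 * X, X) - c0.

Lemma card_Fp p B (j : 'I_n) : dval X [set: 'I_Y] p -> dval h Dset B ->
  #|Fp p B j| = if j < m then 1 else if j \in \bigcup_(i < m) B i then c1 else c0.
Proof.
move=> pv Bv; have [/forallP pv1 /forallP pv2] := andP pv.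
have [/forallP Bv1 /forallP Bv2] := andP Bv.
have pdis i i' : i != i' -> [disjoint p i & p i'].
  by move=> ii; have /forallP/(_ i')/implyP := pv2 i; apply.
have Bdis i i' : i != i' -> [disjoint B i & B i'].
  by move=> ii; have /forallP/(_ i')/implyP := Bv2 i; apply.
have psz i : #|p i| = X by have /andP[_ /eqP] := pv1 i.
case: ifP => jm.
  have [i ei] := to_m jm; rewrite -[1](card1 (p i)); apply: eq_card => A.
  rewrite !inE jm; apply/forallP/eqP => [/(_ i)/implyP/(_ _)/eqP -> //|->].
    by rewrite -ei.
  move=> i'; apply/implyP => /eqP e; rewrite (_ : i' = i) //; apply: val_inj.
  by rewrite e -ei.
have cardP : #|\bigcup_(i < m) p i| = m * X by apply: card_bigcup_ord.
have dP (A : {set 'I_Y}) : [disjoint A & \bigcup_(i < m) p i] = [forall i, A :&: p i == set0].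
  apply/idP/forallP => [d i|d]; first by rewrite setI_eq0; apply: disjointWr d; exact: bigcup_sup.
  apply: bigcup_disjoint => i _; rewrite -setI_eq0.
  exact: d.
case: ifP => jB.
  have [i0 _ ji0] := bigcupP jB.
  have jBi i : (j \in B i) = (i == i0).
    case: eqP => [->//|/eqP ne]; apply/negP => ji.
    by have := disjointFr (Bdis _ _ ne) ji; rewrite ji0.
  pose P' := \bigcup_(i | i != i0) p i.
  have PE : \bigcup_(i < m) p i = p i0 :|: P' by rewrite (bigD1 i0).
  have cardP' : #|P'| = m.-1 * X.
    have := cardP; rewrite PE cardsU disjoint_setI0 ?cards0 ?subn0 ?psz.
      move=> e; have m0 : 0 < m := leq_ltn_trans (leq0n _) (ltn_ord i0).
      by move: e; rewrite -{1}(prednK m0) mulSn => /eqP; rewrite eqn_add2l => /eqP.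
    apply: bigcup_disjoint => i ne; apply: pdis; by rewrite eq_sym.
  transitivity #|[set A : {set 'I_Y} | [disjoint A & P'] && (#|A| == X)] :\:
                 [set A : {set 'I_Y} | [disjoint A & \bigcup_(i < m) p i] && (#|A| == X)]|.
    apply: eq_card => A; rewrite !inE jm dP.
    have dP' : [disjoint A & P'] = [forall i, (i != i0) ==> (A :&: p i == set0)].
      apply/idP/forallP => [d i|d].
        by apply/implyP => ne; rewrite setI_eq0; apply: disjointWr d; exact: bigcup_sup.
      apply: bigcup_disjoint => i ne; rewrite -setI_eq0; exact: (implyP (d i)).
    rewrite dP'; case: (#|A| == X); rewrite ?andbF ?andbT //.
    apply/forallP/andP => [H|[/forallPn [i1 ni1] H] i].
      split.
        apply/forallPn; exists i0; have := H i0; rewrite jBi eqxx.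
        by case: (A :&: p i0 == set0).
      apply/forallP => i; apply/implyP => ne; have := H i; rewrite jBi (negbTE ne).
      by case: (A :&: p i == set0).
    rewrite jBi; case: (eqVneq i i0) => [->|ne].
      case: (eqVneq i1 i0) => [e|ne1]; first by rewrite -e ni1.
      by move: ni1; rewrite (implyP (forallP H i1) ne1).
    by have /implyP/(_ ne) -> := forallP H i.
  rewrite cardsD (setIidPr _); last first.
    apply/subsetP => A; rewrite !inE => /andP[d ->]; rewrite andbT.
    by apply: disjointWr d; rewrite PE subsetUr.
  by rewrite !card_avoid cardP' cardP.
rewrite /c0 -cardP -card_avoid; apply: eq_card => A; rewrite !inE jm dP.
rewrite andbC; congr (_ && _); apply: eq_forallb => i.
have -> : j \in B i = false.
  by apply/negP => ji; move/negbT/negP: jB; apply; by apply/bigcupP; exists i.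
by rewrite eqbF_neg negbK.
Qed.


Lemma card_Dset : #|Dset| = n - m.
Proof.
have : #|[set j : 'I_n | j < m]| = m.
  rewrite -sum1_card (eq_bigl (fun j : 'I_n => j < m)); last by move=> j; rewrite inE.
  by rewrite -(big_ord_widen _ (fun _ => 1) le) sum1_card card_ord.
move=> e; rewrite -e -[n in n - _]card_ord -(cardsC [set j : 'I_n | j < m]) addKn.
by apply: eq_card => j; rewrite !inE leqNgt.
Qed.

Lemma prod_G (UB : {set 'I_n}) : UB \subset Dset -> #|UB| = m * h ->
  \prod_(j : 'I_n) (if j < m then 1 else if j \in UB then c1 else c0) =
  c1 ^ (m * h) * c0 ^ (n - m - m * h).
Proof.
move=> sUB cUB.
rewrite (bigID (fun j : 'I_n => j < m)) /= big1; last by move=> j ->.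
rewrite mul1n (eq_bigr (fun j : 'I_n => if j \in UB then c1 else c0)); last first.
  by move=> j /negbTE ->.
rewrite (bigID (fun j : 'I_n => j \in UB)) /=.
rewrite (eq_bigr (fun _ => c1)); last by move=> j /andP[_ ->].
rewrite [X in _ * X](eq_bigr (fun _ => c0)); last by move=> j /andP[_ /negbTE ->].
rewrite (eq_bigl (fun j => j \in UB)); last first.
  move=> j; case jU: (j \in UB); rewrite ?andbF ?andbT //.
  by have := subsetP sUB _ jU; rewrite inE leqNgt.
rewrite [X in _ * X](eq_bigl (fun j => j \in Dset :\: UB)); last first.
  by move=> j; rewrite !inE -leqNgt andbC.
rewrite !prod_nat_const cUB cardsD (setIidPr sUB) card_Dset cUB //.
Qed.

Lemma count_a_eq : count_a n X Y m h =
  (\prod_(i < m) 'C(Y - i * X, X)) * (\prod_(i < m) 'C((n - m) - i * h, h)) *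
  (c1 ^ (m * h) * c0 ^ (n - m - m * h)).
Proof.
rewrite /count_a -sum1_card (eq_bigl (fun S => keyring_ok X S && event_a m h S)); last first.
  by move=> S; rewrite inE.
rewrite (partition_big (fun S => (preS S, NbS S))
   (fun pr => dval X [set: 'I_Y] pr.1 && dval h Dset pr.2)); last first.
  by move=> S; apply: valid_of.
rewrite (eq_bigr (fun _ => c1 ^ (m * h) * c0 ^ (n - m - m * h))); last first.
  move=> [p B] /= /andP [pv Bv].
  rewrite sum1_card.
  transitivity #|[set S : {ffun 'I_n -> {set 'I_Y}} | [forall j, S j \in Fp p B j]]|.
    by apply: eq_card => S; rewrite !inE -fiber_eq.
  rewrite card_fam (eq_bigr _ (fun j _ => card_Fp j pv Bv)) prod_G //.
    apply/subsetP => j /bigcupP [i _ ji]; have [/forallP Bv1 _] := andP Bv.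
    by have /andP[/subsetP sB _] := Bv1 i; apply: sB.
  apply: card_bigcup_ord.
    by move=> i; have [/forallP Bv1 _] := andP Bv; have /andP[_ /eqP] := Bv1 i.
  by move=> i j ij; have [_ /forallP Bv2] := andP Bv; have /forallP/(_ j)/implyP := Bv2 i; apply.
rewrite sum_nat_const; congr (_ * _).
have e1 := @card_dval _ m X [set: 'I_Y]; rewrite cardsT card_ord in e1.
have e2 := @card_dval _ m h Dset; rewrite card_Dset in e2.
rewrite -e1 -e2 -cardsX; apply: eq_card => -[p B]; rewrite !inE.
by [].
Qed.

End Count.

Lemma count_total_eq n X Y : count_total n X Y = 'C(Y, X) ^ n.
Proof.
rewrite /count_total (_ : [set S | keyring_ok X S] =
  [set S : {ffun 'I_n -> {set 'I_Y}} | [forall j, S j \in [set A : {set 'I_Y} | #|A| == X]]]).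
  rewrite card_fam (eq_bigr (fun _ => 'C(Y, X))); last by move=> j _; rewrite card_draws card_ord.
  by rewrite prod_nat_const card_ord.
by apply/setP => S; rewrite !inE /keyring_ok; apply: eq_forallb => j; rewrite inE.
Qed.


Lemma binD_step X Z : 0 < X ->
  'C(Z, X) + 'C(Z.+1 - X, X) <= 'C(Z.+1, X) + 'C(Z - X, X).
Proof.
case: X => [//|x] _.
rewrite binS.
case: (leqP x.+1 Z) => hz.
  rewrite subSn // binS.
  have := leq_bin2l x (leq_subr x.+1 Z); lia.
rewrite (_ : Z.+1 - x.+1 = 0); last lia.
rewrite bin0n /=; lia.
Qed.

Lemma binD_mono X Z Y : 0 < X -> Z <= Y ->
  'C(Z, X) + 'C(Y - X, X) <= 'C(Y, X) + 'C(Z - X, X).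
Proof.
move=> X0; elim: Y => [|Y IH].
  by rewrite leqn0 => /eqP ->.
rewrite leq_eqVlt => /orP [/eqP ->|]; first by rewrite addnC.
rewrite ltnS => /IH h1; have := binD_step Z X0; have := binD_step Y X0; lia.
Qed.

Lemma binR_step X Z : 0 < X ->
  'C(Z - X, X) * 'C(Z.+1, X) <= 'C(Z, X) * 'C(Z.+1 - X, X).
Proof.
move=> X0; case: (leqP X (Z - X)) => hz; last by rewrite bin_small.
set a := Z - X.
have Za : Z = a + X by rewrite /a subnK //; lia.
have e1 := mul_bin_down Z.+1 X; rewrite /= in e1.
have e2 := mul_bin_down a.+1 X; rewrite /= in e2.
have Zs : Z.+1 - X = a.+1 by lia.
rewrite Zs.
set P := 'C(a, X) in e2 *; set Q := 'C(a.+1, X) in e2 *.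
set R := 'C(Z, X) in e1 *; set S := 'C(Z.+1, X) in e1 *.
have k0 : 0 < (Z.+1 - X) * (a.+1 - X) by rewrite muln_gt0; apply/andP; split; lia.
rewrite -(leq_pmul2r k0).
set u := Z.+1 - X in e1 k0 *; set t := a.+1 - X in e2 k0 *.
have -> : P * S * (u * t) = P * t * (u * S).
  by rewrite -!multE; ring.
have -> : R * Q * (u * t) = R * u * (t * Q).
  by rewrite -!multE; ring.
rewrite -e1 -e2.
have -> : P * t * (Z.+1 * R) = P * R * (t * Z.+1).
  by rewrite -!multE; ring.
have -> : R * u * (a.+1 * P) = P * R * (u * a.+1).
  by rewrite -!multE; ring.
apply: leq_mul => //.
rewrite /t /u Zs Za.
have [t0 ht] : exists t0, a.+1 = t0 + X by exists (a.+1 - X); lia.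
have -> : (a + X).+1 = t0 + X + X by lia.
rewrite ht addnK.
have -> : (t0 + X) * (t0 + X) = t0 * (t0 + X + X) + X * X by rewrite -!multE -!plusE; ring.
exact: leq_addr.
Qed.

Lemma binR_mono X Z Y : 0 < X -> Z <= Y ->
  'C(Z - X, X) * 'C(Y, X) <= 'C(Z, X) * 'C(Y - X, X).
Proof.
move=> X0; elim: Y => [|Y IH].
  by rewrite leqn0 => /eqP ->; rewrite mulnC.
rewrite leq_eqVlt => /orP [/eqP ->|]; first by rewrite mulnC.
rewrite ltnS => ZY; have h1 := IH ZY.
have h2 := binR_step Y X0.
case: (posnP 'C(Y, X)) => c0.
  have YX : Y < X by rewrite ltnNge -bin_gt0 c0.
  have ZX : Z < X by apply: leq_ltn_trans YX.
  rewrite (_ : Z - X = 0); last by apply/eqP; rewrite subn_eq0 ltnW.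
  by rewrite bin_small.
rewrite -(leq_pmul2l c0).
apply: (@leq_trans ('C(Z, X) * 'C(Y - X, X) * 'C(Y.+1, X))).
  by rewrite mulnCA mulnA leq_mul2r h1 orbT.
apply: (@leq_trans ('C(Z,X) * ('C(Y,X) * 'C(Y.+1 - X, X)))).
  by rewrite -mulnA leq_mul2l h2 orbT.
by rewrite mulnCA.
Qed.

Definition bb (X Y k : nat) := 'C(Y - k * X, X).

Lemma bb_ratio X Y k : 0 < X -> bb X Y k.+1 * bb X Y 0 <= bb X Y k * bb X Y 1.
Proof.
move=> X0; rewrite /bb mul0n subn0 mul1n.
have := binR_mono X0 (leq_subr (k * X) Y).
by rewrite -subnDA mulSn addnC.
Qed.

Lemma bb_diff X Y k : 0 < X -> bb X Y k + bb X Y 1 <= bb X Y 0 + bb X Y k.+1.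
Proof.
move=> X0; rewrite /bb mul0n subn0 mul1n.
have := binD_mono X0 (leq_subr (k * X) Y).
by rewrite -subnDA mulSn [X + _]addnC.
Qed.

Lemma bb_mono X Y k l : k <= l -> bb X Y l <= bb X Y k.
Proof.
move=> kl; apply: leq_bin2l; apply: leq_sub2l; by rewrite leq_mul2r kl orbT.
Qed.

Lemma expn_mono a b e : a <= b -> a ^ e <= b ^ e.
Proof. by move=> ab; elim: e => [|e IH]; rewrite ?expn0 // !expnS leq_mul. Qed.

Lemma ffact_bounds N h : (N - h) ^ h <= N ^_ h <= N ^ h.
Proof.
elim: h N => [|h IH] N; first by rewrite !expn0 ffactn0.
rewrite ffactnS expnS [N ^ h.+1]expnS.
have /andP [l u] := IH N.-1.
apply/andP; split.
  apply: leq_mul; first exact: leq_subr.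
  apply: leq_trans l; apply: expn_mono.
  by rewrite subnS -subn1 -subnDA addnC subnDA subn1.
apply: leq_mul => //; apply: leq_trans u _.
apply: expn_mono; exact: leq_pred.
Qed.


Local Open Scope R_scope.
Lemma fact_eq h : h`! = fact h.
Proof. by elim: h => [|h IH] //; rewrite factS IH. Qed.

Lemma INR_muln a b : INR (a * b) = (INR a * INR b).
Proof. exact: mult_INR. Qed.

Lemma INR_expn a b : INR (a ^ b) = (INR a ^ b).
Proof. by elim: b => [|b IH] //; rewrite expnS INR_muln IH. Qed.

Lemma INR_le a b : (a <= b)%N -> (INR a <= INR b).
Proof. by move/leP; apply: le_INR. Qed.

Lemma INR_subn a b : (b <= a)%N -> INR (a - b) = (INR a - INR b).
Proof. by move/leP => h; apply: minus_INR. Qed.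

Definition bbR X Y k : R := INR (bb X Y k).

Lemma R_diff X Y k : (0 < X)%coq_nat -> bbR X Y k + bbR X Y 1 <= bbR X Y 0 + bbR X Y (S k).
Proof. move/ltP=> X0; rewrite /bbR -!plus_INR; apply: INR_le; exact: bb_diff. Qed.

Lemma R_ratio X Y k : (0 < X)%coq_nat -> (bbR X Y (S k) * bbR X Y 0 <= bbR X Y k * bbR X Y 1).
Proof. move/ltP=> X0; rewrite /bbR -!INR_muln; apply: INR_le; exact: bb_ratio. Qed.

Lemma R_mono X Y k l : (k <= l)%coq_nat -> (bbR X Y l <= bbR X Y k).
Proof. by move/leP=> kl; apply: INR_le; apply: bb_mono. Qed.

Lemma R_pos X Y : (X <= Y)%coq_nat -> (0 < bbR X Y 0).
Proof.
move/leP=> XY; apply: lt_0_INR; apply/ltP; rewrite /bb mul0n subn0 bin_gt0 //.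
Qed.

Lemma R_q X Y : q_edge X Y = (1 - bbR X Y 1 / bbR X Y 0).
Proof. by rewrite /q_edge /bbR /bb mul0n subn0 mul1n. Qed.

Definition VpR X Y m : R := INR (\prod_(i < m) 'C(Y - i * X, X)).
Definition VBR n m h : R := INR (\prod_(i < m) 'C((n - m) - i * h, h)).

Lemma R_prob n X Y m h : (0 < X)%coq_nat -> (X <= Y)%coq_nat -> (m <= n)%coq_nat -> (0 < m)%coq_nat ->
  prob_a n X Y m h = (VpR X Y m * VBR n m h *
     (bbR X Y (Nat.pred m) - bbR X Y m) ^ (m * h) * bbR X Y m ^ (n - m - m * h) / bbR X Y 0 ^ n).
Proof.
move=> /ltP X0 /leP XY /leP mn /ltP m0.
rewrite /prob_a (@count_a_eq n X Y m h mn) count_total_eq /VpR /VBR !INR_muln !INR_expn.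
rewrite /c1 /c0 INR_subn; last by have := bb_mono X Y (leq_pred m); rewrite /bb.
by rewrite /bbR /bb mul0n subn0 !Rmult_assoc.
Qed.

Lemma R_Vp X Y m : (bbR X Y m ^ m <= VpR X Y m <= bbR X Y 0 ^ m).
Proof.
rewrite /bbR /VpR -!INR_expn; split; apply: INR_le.
  have -> : (bb X Y m ^ m = \prod_(i < m) bb X Y m)%N by rewrite prod_nat_const card_ord.
  apply: leq_prod => i _.
  by apply: bb_mono; exact: ltnW.
have -> : (bb X Y 0 ^ m = \prod_(i < m) bb X Y 0)%N by rewrite prod_nat_const card_ord.
apply: leq_prod => i _.
by apply: (bb_mono X Y (leq0n i)).
Qed.

Lemma R_VB n m h : (INR (n - (m + m * h + h)) ^ (h * m) <= VBR n m h * INR (fact h) ^ m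
                    <= INR n ^ (h * m)).
Proof.
rewrite /VBR -fact_eq -!INR_expn -INR_muln !expnM.
rewrite (_ : (h`! ^ m = \prod_(i < m) h`!)%N); last by rewrite prod_nat_const card_ord.
rewrite -big_split /=.
have -> : (((n - (m + m * h + h)) ^ h) ^ m = \prod_(i < m) (n - (m + m * h + h)) ^ h)%N.
  by rewrite prod_nat_const card_ord.
have -> : ((n ^ h) ^ m = \prod_(i < m) n ^ h)%N by rewrite prod_nat_const card_ord.
split; apply: INR_le; apply: leq_prod => i _; rewrite bin_ffact;
  have /andP[l u] := ffact_bounds (n - m - i * h) h.
  apply: leq_trans l; apply: expn_mono.
  have := ltn_ord i; nia.
apply: leq_trans u _; apply: expn_mono; lia.
Qed.


End Comb.

Module Ana.
From Stdlib Require Import Reals Factorial Lra Lia Psatz.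
Local Open Scope R_scope.

Lemma cv_evt (a b : nat -> R) L : Un_cv a L ->
  (exists N, forall n, (N <= n)%nat -> a n = b n) -> Un_cv b L.
Proof.
intros Ha [N HN] eps Heps.
destruct (Ha eps Heps) as [N1 H1].
exists (Nat.max N N1); intros n Hn.
rewrite <- HN by lia. apply H1; lia.
Qed.

Lemma squeeze (a l r : nat -> R) L : Un_cv l L -> Un_cv r L ->
  (exists N, forall n, (N <= n)%nat -> l n <= a n <= r n) -> Un_cv a L.
Proof.
intros Hl Hr [N HN] eps Heps.
destruct (Hl eps Heps) as [N1 H1]; destruct (Hr eps Heps) as [N2 H2].
exists (Nat.max N (Nat.max N1 N2)); intros n Hn.
specialize (HN n ltac:(lia)); specialize (H1 n ltac:(lia)); specialize (H2 n ltac:(lia)).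
unfold Rdist in *; apply Rabs_def1; apply Rabs_def2 in H1; apply Rabs_def2 in H2; lra.
Qed.

Lemma cv_const c : Un_cv (fun _ => c) c.
Proof. intros eps Heps; exists O; intros; unfold Rdist; rewrite Rminus_diag, Rabs_R0; lra. Qed.

Lemma cv_pow (a : nat -> R) L j : Un_cv a L -> Un_cv (fun n => a n ^ j) (L ^ j).
Proof.
intros Ha; induction j as [|j IH]; simpl.
- apply cv_const.
- apply CV_mult; assumption.
Qed.

Lemma cv_pow1 (a : nat -> R) j : Un_cv a 1 -> Un_cv (fun n => a n ^ j) 1.
Proof. intros H; rewrite <- (pow1 j); apply cv_pow; exact H. Qed.

Lemma cv_lin (x : nat -> R) c : Un_cv x 0 -> Un_cv (fun n => 1 - c * x n) 1.
Proof.
intros H.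
assert (H' : Un_cv (fun n => 1 - c * x n) (1 - c * 0)).
{ apply CV_minus; [apply cv_const|]. apply CV_mult; [apply cv_const|exact H]. }
replace (1 - c * 0) with 1 in H' by ring; exact H'.
Qed.

Lemma cv_scal (x : nat -> R) c : Un_cv x 0 -> Un_cv (fun n => c * x n) 0.
Proof.
intros H. assert (H' : Un_cv (fun n => c * x n) (c * 0)) by (apply CV_mult; [apply cv_const|exact H]).
replace (c * 0) with 0 in H' by ring; exact H'.
Qed.

Lemma cv_exp0 (x : nat -> R) : Un_cv x 0 -> Un_cv (fun n => exp (x n)) 1.
Proof.
intros H; rewrite <- exp_0; apply (continuity_seq exp x 0); [|exact H].
apply derivable_continuous_pt; apply derivable_pt_exp.
Qed.

Lemma bernoulli_neg x n : -1 <= x -> 1 + INR n * x <= (1 + x) ^ n.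
Proof.
intros Hx; induction n as [|n IH]; [simpl; lra|].
rewrite S_INR; change ((1 + x) ^ S n) with ((1 + x) * (1 + x) ^ n).
assert (0 <= INR n) by apply pos_INR.
assert (0 <= 1 + x) by lra.
apply Rle_trans with ((1 + x) * (1 + INR n * x)).
- assert (0 <= INR n * x * x) by (rewrite Rmult_assoc; apply Rmult_le_pos; [lra|nra]). nra.
- apply Rmult_le_compat_l; lra.
Qed.

Lemma exp_pow x n : exp x ^ n = exp (INR n * x).
Proof.
induction n as [|n IH]; [simpl; rewrite Rmult_0_l, exp_0; reflexivity|].
change (exp x ^ S n) with (exp x * exp x ^ n).
rewrite IH, S_INR, <- exp_plus; f_equal; ring.
Qed.

Lemma pow_poly x j : 0 <= x <= 1 -> (1 - x) ^ j <= 1 - INR j * x + INR j ^ 2 * x ^ 2.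
Proof.
intros Hx; induction j as [|j IH]; [simpl; lra|].
rewrite S_INR; change ((1 - x) ^ S j) with ((1 - x) * (1 - x) ^ j). assert (0 <= INR j) by apply pos_INR.
apply Rle_trans with ((1 - x) * (1 - INR j * x + INR j ^ 2 * x ^ 2)).
- apply Rmult_le_compat_l; lra.
- simpl. nra.
Qed.

Lemma one_minus_le_exp x : 1 - x <= exp (- x).
Proof. pose proof (exp_ineq1_le (- x)); lra. Qed.

Lemma ln_le_sub1 y : 0 < y -> ln y <= y - 1.
Proof. intros Hy. pose proof (exp_ineq1_le (ln y)). rewrite exp_ln in H; lra. Qed.

Lemma ln_le_root4 x : 0 < x -> ln x <= 4 * sqrt (sqrt x).
Proof.
intros Hx.
set (y := sqrt (sqrt x)).
assert (Hy : 0 < y) by (unfold y; apply sqrt_lt_R0, sqrt_lt_R0, Hx).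
assert (Hx4 : x = y ^ 4).
{ assert (Hyy : y * y = sqrt x) by (unfold y; apply sqrt_sqrt; left; apply sqrt_lt_R0; exact Hx).
  replace (y ^ 4) with ((y * y) * (y * y)) by ring. rewrite Hyy, sqrt_sqrt; lra. }
rewrite Hx4, ln_pow by exact Hy.
pose proof (ln_le_sub1 y Hy). simpl INR. lra.
Qed.


Lemma ln_le_mono x y : 0 < x -> x <= y -> ln x <= ln y.
Proof.
intros Hx [Hxy|Hxy]; [left; apply ln_increasing; assumption| subst; right; reflexivity].
Qed.

Lemma cv_invn : Un_cv (fun n => / INR n) 0.
Proof.
intros eps Heps. destruct (archimed_cor1 eps Heps) as [N [HN HN0]].
exists N; intros n Hn. unfold Rdist. rewrite Rminus_0_r.
assert (0 < INR N) by (apply lt_0_INR; lia).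
assert (INR N <= INR n) by (apply le_INR; lia).
rewrite Rabs_right by (left; apply Rinv_0_lt_compat; lra).
apply Rle_lt_trans with (/ INR N); [apply Rinv_le_contravar; lra | exact HN].
Qed.

Lemma cv_cn c : Un_cv (fun n => c / INR n) 0.
Proof. apply cv_scal, cv_invn. Qed.

Lemma cv_ln2 : Un_cv (fun n => ln (INR n) ^ 2 / INR n) 0.
Proof.
apply squeeze with (l := fun _ => 0) (r := fun n => sqrt (256 / INR n)).
- apply cv_const.
- rewrite <- sqrt_0. apply (continuity_seq sqrt). apply continuity_pt_sqrt; lra. apply cv_cn.
- exists 1%nat; intros n Hn.
  assert (Hn1 : 1 <= INR n) by (replace 1 with (INR 1) by reflexivity; apply le_INR; lia).
  assert (Hl0 : 0 <= ln (INR n)) by (rewrite <- ln_1; apply ln_le_mono; lra).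
  assert (Hl : ln (INR n) <= 4 * sqrt (sqrt (INR n))) by (apply ln_le_root4; lra).
  assert (Hs : 0 < sqrt (INR n)) by (apply sqrt_lt_R0; lra).
  assert (Hss : sqrt (sqrt (INR n)) * sqrt (sqrt (INR n)) = sqrt (INR n)) by (apply sqrt_sqrt; lra).
  assert (Hnn : sqrt (INR n) * sqrt (INR n) = INR n) by (apply sqrt_sqrt; lra).
  split.
  + apply Rmult_le_pos; [apply pow_le; exact Hl0| left; apply Rinv_0_lt_compat; lra].
  + rewrite sqrt_div_alt by lra.
    replace 256 with (16 * 16) by ring; rewrite sqrt_square by lra.
    apply Rle_trans with (16 * sqrt (INR n) / INR n).
    * unfold Rdiv; apply Rmult_le_compat_r; [left; apply Rinv_0_lt_compat; lra|].
      simpl. rewrite Rmult_1_r.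
      apply Rle_trans with ((4 * sqrt (sqrt (INR n))) * (4 * sqrt (sqrt (INR n)))).
      { apply Rmult_le_compat; lra. }
      nra.
    * right. rewrite <- Hnn at 2. field. lra.
Qed.

Lemma q_asym (k : nat) (q alpha : nat -> R) :
  (exists n0, forall n, (n0 <= n)%nat ->
     q n = (ln (INR n) + INR (k - 1) * ln (ln (INR n)) + alpha n) / INR n) ->
  Un_cv (fun n => alpha n / ln (INR n)) 0 ->
  (exists N, forall n, (N <= n)%nat ->
     0 < q n /\ q n <= (INR k + 2) * (ln (INR n) ^ 2 / INR n) /\
     INR n * q n ^ 2 <= (INR k + 2) ^ 2 * (ln (INR n) ^ 2 / INR n)).
Proof.
intros [n0 Hq] Ha.
destruct (Ha (1/2) ltac:(lra)) as [N1 HN1].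
exists (Nat.max 3 (Nat.max n0 N1)); intros n Hn.
specialize (Hq n ltac:(lia)); specialize (HN1 n ltac:(lia)).
assert (Hn3 : 3 <= INR n) by (replace 3 with (INR 3) by (simpl; ring); apply le_INR; lia).
set (L := ln (INR n)) in *.
assert (HL : 1 <= L).
{ unfold L. rewrite <- ln_exp with 1. apply ln_le_mono; [apply exp_pos|].
  pose proof exp_le_3; lra. }
assert (HLL0 : 0 <= ln L) by (rewrite <- ln_1; apply ln_le_mono; lra).
assert (HLL1 : ln L <= L - 1) by (apply ln_le_sub1; lra).
unfold Rdist in HN1. rewrite Rminus_0_r in HN1. apply Rabs_def2 in HN1.
assert (HaL : - L / 2 <= alpha n <= L / 2).
{ replace (alpha n) with ((alpha n / L) * L) by (field; lra).
  set (t := alpha n / L) in *. destruct HN1 as [H1 H2]. split; nra. }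
assert (Hk0 : 0 <= INR (k - 1)) by apply pos_INR.
assert (Hk1 : INR (k - 1) <= INR k) by (apply le_INR; lia).
assert (Hnpos : 0 < INR n) by lra.
assert (HqN : q n * INR n = L + INR (k - 1) * ln L + alpha n) by (rewrite Hq; field; lra).
assert (Hlow : L / 2 <= q n * INR n).
{ assert (P0 : 0 <= INR (k - 1) * ln L) by (apply Rmult_le_pos; lra). lra. }
assert (P1 : INR (k - 1) * ln L <= INR (k - 1) * L) by (apply Rmult_le_compat_l; lra).
assert (P2 : INR (k - 1) * L <= INR k * L) by (apply Rmult_le_compat_r; lra).
assert (P3 : 0 <= INR (k - 1) * ln L) by (apply Rmult_le_pos; lra).
assert (Hup : q n * INR n <= (INR k + 2) * L) by lra.
assert (Hq0 : 0 < q n).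
{ apply Rmult_lt_reg_r with (INR n); [lra|]. lra. }
assert (Hqup : q n <= (INR k + 2) * L / INR n).
{ apply Rmult_le_reg_r with (INR n); [lra|]. unfold Rdiv. rewrite Rmult_assoc, Rinv_l by lra. lra. }
split; [exact Hq0|split].
- apply Rle_trans with ((INR k + 2) * L / INR n); [exact Hqup|].
  unfold Rdiv. rewrite Rmult_assoc. apply Rmult_le_compat_l; [lra|].
  apply Rmult_le_compat_r; [left; apply Rinv_0_lt_compat; lra|]. nra.
- replace (INR n * q n ^ 2) with ((q n * INR n) ^ 2 / INR n) by (field; lra).
  replace ((INR k + 2) ^ 2 * (L ^ 2 / INR n)) with (((INR k + 2) * L) ^ 2 / INR n) by (field; lra).
  unfold Rdiv; apply Rmult_le_compat_r; [left; apply Rinv_0_lt_compat; lra|].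
  apply pow_incr; lra.
Qed.


Section U.
Variables (X Y : nat) (X0 : (0 < X)%nat) (XY : (X <= Y)%nat).

Definition uu k := Comb.bbR X Y k / Comb.bbR X Y 0.

Lemma C_pos : 0 < Comb.bbR X Y 0.
Proof. exact (@Comb.R_pos X Y XY). Qed.

Lemma q_eq : q_edge X Y = 1 - uu 1.
Proof. rewrite Comb.R_q; reflexivity. Qed.

Lemma uu0 : uu 0 = 1.
Proof. unfold uu; field; pose proof C_pos; lra. Qed.

Lemma uu_nn k : 0 <= uu k.
Proof.
unfold uu, Comb.bbR; apply Rmult_le_pos; [apply pos_INR|left; apply Rinv_0_lt_compat, C_pos].
Qed.

Lemma uu_le1 k : uu k <= 1.
Proof.
unfold uu. pose proof C_pos. pose proof (@Comb.R_mono X Y 0 k ltac:(lia)).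
apply Rmult_le_reg_r with (Comb.bbR X Y 0); [lra|]. unfold Rdiv; rewrite Rmult_assoc, Rinv_l; lra.
Qed.

Lemma q01 : 0 <= q_edge X Y <= 1.
Proof. rewrite q_eq; pose proof (uu_nn 1); pose proof (uu_le1 1); lra. Qed.

Lemma uu_diff k : uu k + uu 1 <= 1 + uu (S k).
Proof.
pose proof C_pos. pose proof (@Comb.R_diff X Y k X0).
unfold uu. apply Rmult_le_reg_r with (Comb.bbR X Y 0); [lra|].
replace ((Comb.bbR X Y k / Comb.bbR X Y 0 + Comb.bbR X Y 1 / Comb.bbR X Y 0) * Comb.bbR X Y 0) with (Comb.bbR X Y k + Comb.bbR X Y 1) by (field; lra).
replace ((1 + Comb.bbR X Y (S k) / Comb.bbR X Y 0) * Comb.bbR X Y 0) with (Comb.bbR X Y 0 + Comb.bbR X Y (S k)) by (field; lra).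
exact H0.
Qed.

Lemma uu_ratio k : uu (S k) <= uu k * uu 1.
Proof.
pose proof C_pos. pose proof (@Comb.R_ratio X Y k X0).
unfold uu. apply Rmult_le_reg_r with (Comb.bbR X Y 0 * Comb.bbR X Y 0); [nra|].
replace (Comb.bbR X Y (S k) / Comb.bbR X Y 0 * (Comb.bbR X Y 0 * Comb.bbR X Y 0)) with (Comb.bbR X Y (S k) * Comb.bbR X Y 0) by (field; lra).
replace (Comb.bbR X Y k / Comb.bbR X Y 0 * (Comb.bbR X Y 1 / Comb.bbR X Y 0) * (Comb.bbR X Y 0 * Comb.bbR X Y 0)) with (Comb.bbR X Y k * Comb.bbR X Y 1) by (field; lra).
exact H0.
Qed.

Lemma uu_lower k : 1 - INR k * q_edge X Y <= uu k.
Proof.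
rewrite q_eq. induction k as [|k IH].
- rewrite uu0; simpl; lra.
- rewrite S_INR. pose proof (uu_diff k). lra.
Qed.

Lemma uu_upper k : uu k <= (1 - q_edge X Y) ^ k.
Proof.
rewrite q_eq. replace (1 - (1 - uu 1)) with (uu 1) by ring.
induction k as [|k IH].
- rewrite uu0; simpl; lra.
- change (uu 1 ^ S k) with (uu 1 * uu 1 ^ k).
  apply Rle_trans with (uu k * uu 1); [apply uu_ratio|].
  rewrite Rmult_comm. apply Rmult_le_compat_l; [apply uu_nn|exact IH].
Qed.

Lemma vv_upper m : (1 <= m)%nat -> uu (Nat.pred m) - uu m <= q_edge X Y.
Proof.
intros Hm. rewrite q_eq. destruct m as [|m]; [lia|]. simpl Nat.pred.
pose proof (uu_diff m). lra.
Qed.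

End U.


Lemma R_prob' n X Y m h : (0 < X)%nat -> (X <= Y)%nat -> (m <= n)%nat -> (0 < m)%nat ->
  prob_a n X Y m h = Comb.VpR X Y m * Comb.VBR n m h *
     (Comb.bbR X Y (Nat.pred m) - Comb.bbR X Y m) ^ (m * h) * Comb.bbR X Y m ^ (n - m - m * h) / Comb.bbR X Y 0 ^ n.
Proof. intros; exact (@Comb.R_prob n X Y m h H H0 H1 H2). Qed.

Lemma R_Vp' X Y m : Comb.bbR X Y m ^ m <= Comb.VpR X Y m <= Comb.bbR X Y 0 ^ m.
Proof. exact (Comb.R_Vp X Y m). Qed.

Lemma R_VB' n m h : INR (n - (m + m * h + h)) ^ (h * m) <= Comb.VBR n m h * INR (fact h) ^ m
                    <= INR n ^ (h * m).
Proof. exact (Comb.R_VB n m h). Qed.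

Lemma ratio_eq n X Y m h q (X0 : (0 < X)%nat) (XY : (X <= Y)%nat) :
  (m + m * h <= n)%nat -> (0 < m)%nat -> (0 < n)%nat -> q = q_edge X Y -> 0 < q ->
  prob_a n X Y m h /
    ((/ INR (fact h)) ^ m * (INR n * q) ^ (h * m) * exp (- (INR m * (INR n * q))))
  = (Comb.VpR X Y m / Comb.bbR X Y 0 ^ m) * (Comb.VBR n m h * INR (fact h) ^ m / INR n ^ (h * m)) *
    ((uu X Y (Nat.pred m) - uu X Y m) / q) ^ (m * h) *
    (uu X Y m ^ (n - m - m * h) * exp (INR m * (INR n * q))).
Proof.
intros Hn Hm Hn0 Hq Hq0.
rewrite R_prob' by lia.
pose proof (C_pos X Y XY) as HC.
set (C := Comb.bbR X Y 0) in *.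
assert (E1 : Comb.bbR X Y (Nat.pred m) = uu X Y (Nat.pred m) * C) by (unfold uu; fold C; field; lra).
assert (E2 : Comb.bbR X Y m = uu X Y m * C) by (unfold uu; fold C; field; lra).
rewrite E1, E2.
replace (uu X Y (Nat.pred m) * C - uu X Y m * C) with ((uu X Y (Nat.pred m) - uu X Y m) * C) by ring.
assert (EC : C ^ n = C ^ m * C ^ (m * h) * C ^ (n - m - m * h)).
{ rewrite <- !pow_add. f_equal. lia. }
rewrite EC.
rewrite (Nat.mul_comm h m).
rewrite exp_Ropp.
rewrite !Rpow_mult_distr.
unfold Rdiv. rewrite Rpow_mult_distr, pow_inv, pow_inv.
assert (INR n <> 0) by (apply not_0_INR; lia).
assert (INR (fact h) <> 0) by apply INR_fact_neq_0.
assert (exp (INR m * (INR n * q)) <> 0) by (apply Rgt_not_eq, exp_pos).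
assert (C ^ m <> 0) by (apply pow_nonzero; lra).
assert (C ^ (m * h) <> 0) by (apply pow_nonzero; lra).
assert (C ^ (n - m - m * h) <> 0) by (apply pow_nonzero; lra).
assert (INR n ^ (m * h) <> 0) by (apply pow_nonzero; lra).
assert (q ^ (m * h) <> 0) by (apply pow_nonzero; lra).
assert (INR (fact h) ^ m <> 0) by (apply pow_nonzero; lra).
set (a1 := C ^ m) in *. set (a2 := C ^ (m * h)) in *. set (a3 := C ^ (n - m - m * h)) in *.
set (a4 := INR n ^ (m * h)) in *. set (a5 := q ^ (m * h)) in *. set (a6 := INR (fact h) ^ m) in *.
set (a7 := exp (INR m * (INR n * q))) in *.
field; repeat split; assumption.
Qed.


Lemma le_div a b c : 0 < c -> a <= b -> a / c <= b / c.
Proof. intros Hc Hab; unfold Rdiv; apply Rmult_le_compat_r; [left; apply Rinv_0_lt_compat|]; lra. Qed.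

Lemma pow_le1 x j : 0 <= x <= 1 -> x ^ j <= 1.
Proof. intros Hx; rewrite <- (pow1 j); apply pow_incr; lra. Qed.


End Ana.

Open Scope R_scope.
Import Ana.
Theorem mainTheorem9 (k m h : nat) (X Y : nat -> nat)
  (hk : (1 <= k)%nat) (hm : (1 <= m)%nat)
  (hXY : forall n : nat, (1 <= X n)%nat /\ (X n <= Y n)%nat)
  (hX2 : exists n0 : nat, forall n : nat, (n0 <= n)%nat -> (2 <= X n)%nat)
  (alpha : nat -> R)
  (hq : exists n0 : nat, forall n : nat, (n0 <= n)%nat ->
      q_edge (X n) (Y n) =
      (ln (INR n) + INR (k - 1) * ln (ln (INR n)) + alpha n) / INR n)
  (halpha : Un_cv (fun n : nat => alpha n / ln (INR n)) 0) :
  Un_cv (fun n : nat =>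
           prob_a n (X n) (Y n) m h /
           ((/ INR (fact h)) ^ m
            * (INR n * q_edge (X n) (Y n)) ^ (h * m)
            * exp (- (INR m * (INR n * q_edge (X n) (Y n))))))
        1.
Proof.
set (qn := fun n => q_edge (X n) (Y n)).
destruct (q_asym k qn alpha hq halpha) as [Nq Hqa].
assert (Hq0 : Un_cv qn 0).
{ apply squeeze with (l := fun _ => 0) (r := fun n => (INR k + 2) * (ln (INR n) ^ 2 / INR n)).
  - apply cv_const.
  - apply cv_scal, cv_ln2.
  - exists Nq; intros n Hn; destruct (Hqa n Hn) as [H1 [H2 H3]]; lra. }
assert (Hnq2 : Un_cv (fun n => INR n * qn n ^ 2) 0).
{ apply squeeze with (l := fun _ => 0) (r := fun n => (INR k + 2) ^ 2 * (ln (INR n) ^ 2 / INR n)).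
  - apply cv_const.
  - apply cv_scal, cv_ln2.
  - exists Nq; intros n Hn; destruct (Hqa n Hn) as [H1 [H2 H3]]; split; [|lra].
    apply Rmult_le_pos; [apply pos_INR|apply pow_le; lra]. }
assert (Hm1 : 1 <= INR m) by (replace 1 with (INR 1) by reflexivity; apply le_INR; lia).
destruct (Hq0 (/ (INR m ^ 2))) as [Ns HNs].
{ apply Rinv_0_lt_compat; apply pow_lt; lra. }
set (K := (m + m * h + h)%nat).
set (N := Nat.max Nq (Nat.max Ns (K + 1))).
assert (Hev : forall n, (N <= n)%nat ->
   0 < qn n /\ INR m ^ 2 * qn n < 1 /\ INR m * qn n < 1 /\ (K + 1 <= n)%nat).
{ intros n Hn. destruct (Hqa n ltac:(lia)) as [H1 _].
  specialize (HNs n ltac:(lia)). unfold Rdist in HNs; rewrite Rminus_0_r, Rabs_right in HNs by lra.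
  assert (Hm2 : 0 < INR m ^ 2) by (apply pow_lt; lra).
  assert (INR m ^ 2 * qn n < 1).
  { apply Rmult_lt_reg_r with (/ INR m ^ 2); [apply Rinv_0_lt_compat; lra|].
    rewrite Rmult_1_l, Rmult_comm, <- Rmult_assoc, Rinv_l by lra. lra. }
  split; [lra|split; [lra|split; [|lia]]]. simpl in H. nra. }
assert (HX0 : forall n, (0 < X n)%nat) by (intro n; destruct (hXY n); lia).
assert (HXY : forall n, (X n <= Y n)%nat) by (intro n; destruct (hXY n); lia).
assert (C1 : Un_cv (fun n => Comb.VpR (X n) (Y n) m / Comb.bbR (X n) (Y n) 0 ^ m) 1).
{ apply squeeze with (l := fun n => (1 - INR m * qn n) ^ m) (r := fun _ => 1).
  - apply cv_pow1, cv_lin, Hq0.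
  - apply cv_const.
  - exists N; intros n Hn. destruct (Hev n Hn) as [Q1 [Q2 [Q3 Q4]]].
    pose proof (C_pos (X n) (Y n) (HXY n)) as HC.
    assert (HCm : 0 < Comb.bbR (X n) (Y n) 0 ^ m) by (apply pow_lt; lra).
    destruct (R_Vp' (X n) (Y n) m) as [V1 V2].
    pose proof (uu_lower (X n) (Y n) (HX0 n) (HXY n) m) as L1.
    split.
    + apply Rle_trans with (uu (X n) (Y n) m ^ m).
      * apply pow_incr; split; [lra|exact L1].
      * replace (uu (X n) (Y n) m ^ m) with (Comb.bbR (X n) (Y n) m ^ m / Comb.bbR (X n) (Y n) 0 ^ m).
        { apply le_div; assumption. }
        unfold uu, Rdiv. rewrite Rpow_mult_distr, pow_inv. reflexivity.
    + replace 1 with (Comb.bbR (X n) (Y n) 0 ^ m / Comb.bbR (X n) (Y n) 0 ^ m) by (field; lra).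
      apply le_div; assumption. }
assert (C2 : Un_cv (fun n => Comb.VBR n m h * INR (fact h) ^ m / INR n ^ (h * m)) 1).
{ apply squeeze with (l := fun n => (1 - INR K * / INR n) ^ (h * m)) (r := fun _ => 1).
  - apply cv_pow1, cv_lin, cv_invn.
  - apply cv_const.
  - exists N; intros n Hn. destruct (Hev n Hn) as [Q1 [Q2 [Q3 Q4]]].
    assert (Hn0 : 0 < INR n) by (apply lt_0_INR; lia).
    assert (HnK : INR (n - K) = INR n - INR K) by (apply minus_INR; lia).
    assert (HK : INR K < INR n) by (apply lt_INR; lia).
    assert (Hnp : 0 < INR n ^ (h * m)) by (apply pow_lt; lra).
    destruct (R_VB' n m h) as [V1 V2]. fold K in V1. rewrite HnK in V1.
    split.
    + replace ((1 - INR K * / INR n) ^ (h * m)) with ((INR n - INR K) ^ (h * m) / INR n ^ (h * m)).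
      { apply le_div; assumption. }
      unfold Rdiv. rewrite <- pow_inv, <- Rpow_mult_distr. f_equal. field. lra.
    + replace 1 with (INR n ^ (h * m) / INR n ^ (h * m)) by (field; lra).
      apply le_div; assumption. }
assert (C3 : Un_cv (fun n => ((uu (X n) (Y n) (Nat.pred m) - uu (X n) (Y n) m) / qn n) ^ (m * h)) 1).
{ apply squeeze with (l := fun n => (1 - INR m ^ 2 * qn n) ^ (m * h)) (r := fun _ => 1).
  - apply cv_pow1, cv_lin, Hq0.
  - apply cv_const.
  - exists N; intros n Hn. destruct (Hev n Hn) as [Q1 [Q2 [Q3 Q4]]].
    pose proof (uu_lower (X n) (Y n) (HX0 n) (HXY n) (Nat.pred m)) as L1.
    pose proof (uu_upper (X n) (Y n) (HX0 n) (HXY n) m) as U1.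
    pose proof (vv_upper (X n) (Y n) (HX0 n) (HXY n) m hm) as V1.
    pose proof (q01 (X n) (Y n) (HX0 n) (HXY n)) as Q01. fold (qn n) in L1, U1, V1, Q01.
    pose proof (pow_poly (qn n) m Q01) as P1.
    assert (Hpm : INR (Nat.pred m) = INR m - 1).
    { destruct m as [|m']; [lia|]. simpl Nat.pred. rewrite S_INR. ring. }
    rewrite Hpm in L1.
    set (v := uu (X n) (Y n) (Nat.pred m) - uu (X n) (Y n) m) in *.
    assert (Hv : qn n - INR m ^ 2 * qn n ^ 2 <= v) by (unfold v; lra).
    assert (Hvq : 1 - INR m ^ 2 * qn n <= v / qn n).
    { apply Rmult_le_reg_r with (qn n); [lra|]. unfold Rdiv.
      rewrite Rmult_assoc, Rinv_l by lra. simpl in Hv |- *. nra. }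
    assert (Hvq1 : v / qn n <= 1).
    { apply Rmult_le_reg_r with (qn n); [lra|]. unfold Rdiv.
      rewrite Rmult_assoc, Rinv_l by lra. lra. }
    split.
    + apply pow_incr; lra.
    + apply pow_le1; lra. }
assert (C4 : Un_cv (fun n => uu (X n) (Y n) m ^ (n - m - m * h) * exp (INR m * (INR n * qn n))) 1).
{ apply squeeze with (l := fun n => 1 - INR m ^ 2 * (INR n * qn n ^ 2))
                     (r := fun n => exp (INR (m + m * h) * (INR m * qn n))).
  - apply cv_lin, Hnq2.
  - apply cv_exp0, cv_scal, cv_scal, Hq0.
  - exists N; intros n Hn. destruct (Hev n Hn) as [Q1 [Q2 [Q3 Q4]]].
    pose proof (uu_lower (X n) (Y n) (HX0 n) (HXY n) m) as L1.
    pose proof (uu_upper (X n) (Y n) (HX0 n) (HXY n) m) as U1.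
    pose proof (uu_le1 (X n) (Y n) (HX0 n) (HXY n) m) as U2.
    pose proof (q01 (X n) (Y n) (HX0 n) (HXY n)) as Q01. fold (qn n) in L1, U1, Q01.
    set (u := uu (X n) (Y n) m) in *.
    set (j := (n - m - m * h)%nat).
    assert (Hnj : n = (j + (m + m * h))%nat) by (unfold j; lia).
    assert (Hexp : exp (INR m * (INR n * qn n)) = exp (INR m * qn n) ^ n).
    { rewrite exp_pow. f_equal. ring. }
    split.
    + assert (Hun : u ^ n <= u ^ j).
      { rewrite Hnj at 1. rewrite pow_add.
        rewrite <- (Rmult_1_r (u ^ j)) at 2. apply Rmult_le_compat_l.
        - apply pow_le; lra.
        - apply pow_le1; lra. }
      assert (Hun2 : (1 - INR m * qn n) ^ n <= u ^ n) by (apply pow_incr; lra).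
      assert (Hy : (1 - INR m * qn n) * exp (INR m * qn n) >= 1 + - (INR m * qn n) ^ 2).
      { pose proof (exp_ineq1_le (INR m * qn n)). simpl. nra. }
      assert (Hb : 1 + INR n * - (INR m * qn n) ^ 2 <= (1 + - (INR m * qn n) ^ 2) ^ n).
      { apply bernoulli_neg. simpl. nra. }
      assert (Hb2 : (1 + - (INR m * qn n) ^ 2) ^ n <= ((1 - INR m * qn n) * exp (INR m * qn n)) ^ n).
      { apply pow_incr. simpl. split; nra. }
      rewrite Hexp.
      apply Rle_trans with ((1 - INR m * qn n) ^ n * exp (INR m * qn n) ^ n).
      * rewrite <- Rpow_mult_distr.
        replace (1 - INR m ^ 2 * (INR n * qn n ^ 2)) with (1 + INR n * - (INR m * qn n) ^ 2) by ring. lra.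
      * apply Rmult_le_compat_r; [apply pow_le; left; apply exp_pos|lra].
    + assert (Hu : u <= exp (INR m * - qn n)).
      { rewrite <- exp_pow. apply Rle_trans with ((1 - qn n) ^ m); [exact U1|].
        apply pow_incr. split; [lra|]. apply one_minus_le_exp. }
      assert (Huj : u ^ j <= exp (INR j * (INR m * - qn n))).
      { rewrite <- exp_pow. apply pow_incr. split; [lra|exact Hu]. }
      assert (HJ : INR j = INR n - INR (m + m * h)) by (unfold j; rewrite <- minus_INR by lia; f_equal; lia).
      apply Rle_trans with (exp (INR j * (INR m * - qn n)) * exp (INR m * (INR n * qn n))).
      * apply Rmult_le_compat_r; [left; apply exp_pos|exact Huj].
      * rewrite <- exp_plus. right. f_equal. rewrite HJ. ring. }
apply cv_evt with (a := fun n =>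
   (Comb.VpR (X n) (Y n) m / Comb.bbR (X n) (Y n) 0 ^ m) * (Comb.VBR n m h * INR (fact h) ^ m / INR n ^ (h * m)) *
    ((uu (X n) (Y n) (Nat.pred m) - uu (X n) (Y n) m) / qn n) ^ (m * h) *
    (uu (X n) (Y n) m ^ (n - m - m * h) * exp (INR m * (INR n * qn n)))).
- replace 1 with (1 * 1 * 1 * 1) by ring.
  apply CV_mult; [apply CV_mult; [apply CV_mult|]|]; assumption.
- exists N; intros n Hn. destruct (Hev n Hn) as [Q1 [Q2 [Q3 Q4]]].
  symmetry. apply ratio_eq; try assumption; try lia; apply HX0 || apply HXY || reflexivity.
Qed.
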